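(* For any qubit channel (completely positive trace-preserving map) $\Lambda$ on $2\times2$ density matrices, $$2\le 2\mathcal{F}_c(\Lambda)+D_{C_{l_1}}(\Lambda)\le 3.$$
   Context: Coherence is taken with respect to the computational basis $\{|0\rangle,|1\rangle\}$. $C_{l_1}(\rho)=\sum_{j\ne k}|\langle j|\rho|k\rangle|$. The set of maximally coherent qubit states is $\mathcal{M}=\{\frac{1}{\sqrt2}(e^{\mathfrak{i}\theta_0}|0\rangle+e^{\mathfrak{i}\theta_1}|1\rangle):\theta_0,\theta_1\in[0,2\pi]\}$; the coherence fraction of a state is $F_c(\rho)=\max_{|\phi\rangle\in\mathcal{M}}\langle\phi|\rho|\phi\rangle$. The optimal coherence fraction of $\Lambda$ is $\mathcal{F}_c(\Lambda)=\max_{|\psi\rangle}F_c\big(\Lambda(|\psi\rangle\langle\psi|)\big)$ over all pure qubit states $|\psi\rangle$. The decohering power of $\Lambda$ with respect to $C_{l_1}$ is $D_{C_{l_1}}(\Lambda)=\max_{|\phi\rangle\in\mathcal{M}}\{C_{l_1}(|\phi\rangle\langle\phi|)-C_{l_1}(\Lambda(|\phi\rangle\langle\phi|))\}=1-\min_{|\phi\rangle\in\mathcal{M}}C_{l_1}\big(\Lambda(|\phi\rangle\langle\phi|)\big)$. *)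

(* Defs.v *)
From HB Require Import structures.
From mathcomp Require Import all_boot all_order all_algebra.
From mathcomp Require Import complex.
From mathcomp Require Import all_classical all_reals.
From mathcomp Require Import trigo.
Set Implicit Arguments. Unset Strict Implicit. Unset Printing Implicit Defensive.
Import Order.TTheory GRing.Theory Num.Theory.
Local Open Scope ring_scope.
Local Open Scope classical_set_scope.
Local Open Scope complex_scope.

Section Qubit.
Variable R : realType.
Local Notation C := (R[i]).

Definition adj (m n : nat) (A : 'M[C]_(m, n)) : 'M[C]_(n, m) :=
  map_mx (@conjc R) A^T.

Definition proj (psi : 'cV[C]_2) : 'M[C]_2 := psi *m adj psi.

Definition unit_vec (psi : 'cV[C]_2) : Prop :=
  \sum_(i < 2) (Normc.normc (psi i 0)) ^+ 2 = 1.

Definition expi (t : R) : C := Complex (cos t) (sin t).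

Definition mcs (t0 t1 : R) : 'cV[C]_2 :=
  \col_(i < 2) (((Num.sqrt 2)^-1)%:C * expi (if i == ord0 then t0 else t1)).

Definition in_angle (t : R) : Prop := 0 <= t <= 2 * pi.

Definition MCS : set 'cV[C]_2 :=
  [set phi | exists t0 t1, in_angle t0 /\ in_angle t1 /\ phi = mcs t0 t1].

Definition Cl1 (rho : 'M[C]_2) : R :=
  \sum_(j < 2) \sum_(k < 2 | j != k) Normc.normc (rho j k).

(* <phi| rho |phi>  (real part; it is real for Hermitian rho) *)
Definition expect (phi : 'cV[C]_2) (rho : 'M[C]_2) : R :=
  complex.Re ((adj phi *m rho *m phi) 0 0).

(* coherence fraction F_c(rho) = max over M (taken as supremum) *)
Definition coh_frac (rho : 'M[C]_2) : R :=
  sup [set expect phi rho | phi in MCS].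

(* positive semidefiniteness of an n x n block matrix with 2x2 blocks,
   i.e. of an element of M_n(M_2) = M_{2n}(C) *)
Definition psd_block (n : nat) (X : 'I_n -> 'I_n -> 'M[C]_2) : Prop :=
  forall v : 'I_n -> 'cV[C]_2,
    0 <= \sum_(i < n) \sum_(j < n) (adj (v i) *m X i j *m v j) 0 0.

Definition is_qubit_channel (L : 'M[C]_2 -> 'M[C]_2) : Prop :=
  (forall (a : C) (X Y : 'M[C]_2), L (a *: X + Y) = a *: L X + L Y) /\
  (forall (n : nat) (X : 'I_n -> 'I_n -> 'M[C]_2),
      psd_block X -> psd_block (fun i j => L (X i j))) /\
  (forall X : 'M[C]_2, \tr (L X) = \tr X).

Definition opt_coh_frac (L : 'M[C]_2 -> 'M[C]_2) : R :=
  sup [set coh_frac (L (proj psi)) | psi in unit_vec].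

Definition decoh_power (L : 'M[C]_2 -> 'M[C]_2) : R :=
  sup [set Cl1 (proj phi) - Cl1 (L (proj phi)) | phi in MCS].

End Qubit.

(* Main.v *)
Require Import Defs.
From HB Require Import structures.
From mathcomp Require Import all_boot all_order all_algebra.
From mathcomp Require Import complex.
From mathcomp Require Import all_classical all_reals trigo.
From mathcomp Require Import ring lra.
Import Order.TTheory GRing.Theory Num.Theory.
Local Open Scope ring_scope.

Section Help.
Variable R : realType.
Local Notation C := (R[i]).
Local Open Scope complex_scope.

Lemma sum2 (V : nmodType) (F : 'I_2 -> V) : \sum_(i < 2) F i = F 0 + F 1.
Proof. rewrite big_ord_recl big_ord1; congr (_ + F _); exact: val_inj. Qed.
Lemma sum1 (F : 'I_1 -> C) : \sum_(i < 1) F i = F 0.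
Proof. by rewrite big_ord1. Qed.

Lemma qf (M : 'M[C]_2) (v : 'cV[C]_2) :
  (adj v *m M *m v) 0 0 = (v 0 0)^* * M 0 0 * v 0 0 + (v 0 0)^* * M 0 1 * v 1 0
    + ((v 1 0)^* * M 1 0 * v 0 0 + (v 1 0)^* * M 1 1 * v 1 0).
Proof.
rewrite !mxE !sum2 !mxE !sum2 !mxE /=; ring.
Qed.

Lemma cmul3 (a1 a2 m1 m2 c1 c2 : R) : (a1 +i* a2)^* * (m1 +i* m2) * (c1 +i* c2) =
  ((a1 * m1 + a2 * m2) * c1 - (a1 * m2 - a2 * m1) * c2) +i* ((a1 * m1 + a2 * m2) * c2 + (a1 * m2 - a2 * m1) * c1).
Proof. simpc. congr (_ +i* _); ring. Qed.

Lemma projE (psi : 'cV[C]_2) j k : Defs.proj psi j k = psi j 0 * (psi k 0)^*.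
Proof. by rewrite !mxE sum1 !mxE. Qed.


Definition tre (a1 a2 m1 m2 c1 c2 : R) := (a1 * m1 + a2 * m2) * c1 - (a1 * m2 - a2 * m1) * c2.
Definition tim (a1 a2 m1 m2 c1 c2 : R) := (a1 * m1 + a2 * m2) * c2 + (a1 * m2 - a2 * m1) * c1.

Lemma cmul3' (a1 a2 m1 m2 c1 c2 : R) : (a1 +i* a2)^* * (m1 +i* m2) * (c1 +i* c2) =
  (tre a1 a2 m1 m2 c1 c2) +i* (tim a1 a2 m1 m2 c1 c2).
Proof. exact: cmul3. Qed.

Definition col2 (a b : C) : 'cV[C]_2 := \col_(i < 2) (if i == 0 then a else b).

Lemma Qv (M : 'M[C]_2) a b : (adj (col2 a b) *m M *m col2 a b) 0 0 =
  a^* * M 0 0 * a + a^* * M 0 1 * b + (b^* * M 1 0 * a + b^* * M 1 1 * b).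
Proof. by rewrite qf !mxE /=. Qed.

Lemma state_facts (rho : 'M[C]_2) : (forall v : 'cV[C]_2, 0 <= (adj v *m rho *m v) 0 0) -> \tr rho = 1 ->
 exists p q x y : R, [/\ rho 0 0 = p +i* 0, rho 1 1 = q +i* 0, rho 0 1 = x +i* y,
    rho 1 0 = x +i* (-y) & [/\ 0 <= p, 0 <= q, p + q = 1 &
   forall a1 a2 b1 b2, 0 <= tre a1 a2 p 0 a1 a2 + tre a1 a2 x y b1 b2 + (tre b1 b2 x (-y) a1 a2 + tre b1 b2 q 0 b1 b2)]].
Proof.
move=> Hv; rewrite /mxtrace sum2.
case E00: (rho 0 0) => [p p']; case E01: (rho 0 1) => [x y];
case E10: (rho 1 0) => [u w]; case E11: (rho 1 1) => [q q'] Htr.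
have G a1 a2 b1 b2 : (0 <= tre a1 a2 p p' a1 a2 + tre a1 a2 x y b1 b2 + (tre b1 b2 u w a1 a2 + tre b1 b2 q q' b1 b2)) /\
   tim a1 a2 p p' a1 a2 + tim a1 a2 x y b1 b2 + (tim b1 b2 u w a1 a2 + tim b1 b2 q q' b1 b2) = 0.
  move: (Hv (col2 (a1 +i* a2) (b1 +i* b2))); rewrite Qv E00 E01 E10 E11 !cmul3'; simpc.
  by case/andP => /eqP -> ->.
have [Ht1 Ht2] : p + q = 1 /\ p' + q' = 0 by move: Htr; simpc; case.
have [g1 i1] := G 1 0 0 0; have [g2 i2] := G 0 0 1 0.
have [g3 i3] := G 1 0 1 0; have [g4 i4] := G 1 0 0 1.
rewrite /tre /tim in g1 i1 g2 i2 g3 i3 g4 i4.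
have hp' : p' = 0 by lra.
have hq' : q' = 0 by lra.
have hu : u = x by lra.
have hw : w = - y by lra.
subst p' q' u w.
exists p, q, x, y; split => //; split => //.
- lra.
- lra.
- by move=> a1 a2 b1 b2; case: (G a1 a2 b1 b2).
Qed.


Lemma Cl1E (M : 'M[C]_2) : Cl1 M = Normc.normc (M 0 1) + Normc.normc (M 1 0).
Proof.
rewrite /Cl1 sum2 big_mkcond sum2 big_mkcond sum2 /=.
by rewrite add0r addr0.
Qed.

Lemma normc_ge0 (z : C) : 0 <= Normc.normc z.
Proof. by case: z => a b /=; rewrite sqrtr_ge0. Qed.

Lemma proj_psd (psi v : 'cV[C]_2) : 0 <= (adj v *m Defs.proj psi *m v) 0 0.
Proof.
rewrite qf !projE.
case: (v 0 0) => a1 a2; case: (v 1 0) => b1 b2; case: (psi 0 0) => p1 p2; case: (psi 1 0) => q1 q2.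
simpc; apply/andP; split; first by apply/eqP; ring.
match goal with |- is_true (0 <= ?e) =>
  have -> : e = (a1 * p1 + a2 * p2 + b1 * q1 + b2 * q2) ^+ 2 + (a1 * p2 - a2 * p1 + b1 * q2 - b2 * q1) ^+ 2 by ring end.
by rewrite addr_ge0 // sqr_ge0.
Qed.


Let k : R := (Num.sqrt 2)^-1.
Lemma hk : k ^+ 2 = 2^-1.
Proof. by rewrite /k exprVn sqr_sqrtr // ler0n. Qed.

Lemma mcsE (t0 t1 : R) : mcs t0 t1 0 0 = (k * cos t0) +i* (k * sin t0) /\
                   mcs t0 t1 1 0 = (k * cos t1) +i* (k * sin t1).
Proof.
rewrite !mxE /expi /=.
by split; rewrite -complexr0; simpc.
Qed.

Lemma tr_proj (psi : 'cV[C]_2) : unit_vec psi -> \tr (Defs.proj psi) = 1.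
Proof.
rewrite /unit_vec /mxtrace !sum2 !projE.
case: (psi 0 0) => a1 a2; case: (psi 1 0) => b1 b2 /=.
rewrite !sqr_sqrtr ?addr_ge0 ?sqr_ge0 // => h.
simpc; transitivity ((1:R) +i* (0:R)); last by []; congr (_ +i* _); last by ring.
by rewrite -h; ring.
Qed.


Lemma unit_mcs (t0 t1 : R) : unit_vec (mcs t0 t1).
Proof.
have [E0 E1] := mcsE t0 t1.
rewrite /unit_vec sum2 E0 E1 /= !sqr_sqrtr ?addr_ge0 ?sqr_ge0 //.
have c0 := cos2Dsin2 t0; have c1 := cos2Dsin2 t1.
rewrite !exprMn hk; lra.
Qed.

Lemma Cl1_mcs (t0 t1 : R) : Cl1 (Defs.proj (mcs t0 t1)) = 1.
Proof.
have [E0 E1] := mcsE t0 t1.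
rewrite Cl1E !projE E0 E1; simpc; rewrite /=.
have c0 := cos2Dsin2 t0; have c1 := cos2Dsin2 t1.
set c0' := cos t0 in c0 *; set s0 := sin t0 in c0 *; set c1' := cos t1 in c1 *; set s1 := sin t1 in c1 *.
have Q : forall e1 e2 : R, e1 ^+ 2 + e2 ^+ 2 = k ^+ 4 * ((c0' ^+ 2 + s0 ^+ 2) * (c1' ^+ 2 + s1 ^+ 2)) ->
   Num.sqrt (e1 ^+ 2 + e2 ^+ 2) = 2^-1.
  move=> e1 e2 ->; rewrite c0 c1 !mulr1 (_ : 4 = 2 * 2)%N // exprM hk sqrtr_sqr ger0_norm //.
  by rewrite invr_ge0 ler0n.
rewrite !Q; first lra.
all: by rewrite (_ : 4 = 2 * 2)%N // exprM; ring.
Qed.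


Definition G (p q x y a1 a2 b1 b2 : R) := tre a1 a2 p 0 a1 a2 + tre a1 a2 x y b1 b2 +
   (tre b1 b2 x (-y) a1 a2 + tre b1 b2 q 0 b1 b2).

Lemma expectE (rho : 'M[C]_2) p q x y (t0 t1 : R) : rho 0 0 = p +i* 0 -> rho 1 1 = q +i* 0 ->
  rho 0 1 = x +i* y -> rho 1 0 = x +i* (-y) ->
  expect (mcs t0 t1) rho = G p q x y (k * cos t0) (k * sin t0) (k * cos t1) (k * sin t1).
Proof.
move=> E00 E11 E01 E10; have [M0 M1] := mcsE t0 t1.
by rewrite /expect qf E00 E11 E01 E10 M0 M1 !cmul3'; simpc.
Qed.

Lemma expect_le1 (rho : 'M[C]_2) p q x y (t0 t1 : R) : rho 0 0 = p +i* 0 -> rho 1 1 = q +i* 0 ->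
  rho 0 1 = x +i* y -> rho 1 0 = x +i* (-y) -> p + q = 1 ->
  (forall a1 a2 b1 b2, 0 <= G p q x y a1 a2 b1 b2) ->
  expect (mcs t0 t1) rho <= 1.
Proof.
move=> E00 E11 E01 E10 hpq Hf; rewrite (expectE _ _ _ _ _ _ _ E00 E11 E01 E10).
have h := Hf (k * cos t0) (k * sin t0) (- (k * cos t1)) (- (k * sin t1)).
have E : G p q x y (k * cos t0) (k * sin t0) (k * cos t1) (k * sin t1) +
         G p q x y (k * cos t0) (k * sin t0) (- (k * cos t1)) (- (k * sin t1)) =
         2 * k ^+ 2 * (p * (cos t0 ^+ 2 + sin t0 ^+ 2) + q * (cos t1 ^+ 2 + sin t1 ^+ 2)).
  by rewrite /G /tre; ring.
rewrite !cos2Dsin2 hk in E; lra.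
Qed.

Lemma expect_lower (rho : 'M[C]_2) p q x y (t : R) : rho 0 0 = p +i* 0 -> rho 1 1 = q +i* 0 ->
  rho 0 1 = x +i* y -> rho 1 0 = x +i* (-y) -> p + q = 1 ->
  2 * expect (mcs 0 t) rho = 1 + 2 * (x * cos t - y * sin t).
Proof.
move=> E00 E11 E01 E10 hpq; rewrite (expectE _ _ _ _ _ _ _ E00 E11 E01 E10) cos0 sin0.
have E : G p q x y (k * 1) (k * 0) (k * cos t) (k * sin t) =
   k ^+ 2 * (p + q * (cos t ^+ 2 + sin t ^+ 2) + 2 * (x * cos t - y * sin t)).
  by rewrite /G /tre; ring.
rewrite E cos2Dsin2 hk; lra.
Qed.

Lemma angle (c s : R) : c ^+ 2 + s ^+ 2 = 1 -> exists t, in_angle t /\ cos t = c /\ sin t = s.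
Proof.
move=> h.
have hc : -1 <= c <= 1.
  have hc2 : c ^+ 2 <= 1 by have := sqr_ge0 s; lra.
  by rewrite -ler_norml -(expr_le1 (n:=2)) // real_normK ?num_real.
have hs2 : Num.sqrt (1 - c ^+ 2) = `|s|.
  by rewrite -h addrC addKr sqrtr_sqr.
have c2 : cos (2 * pi) = 1 :> R by rewrite mulr_natl cos2pi.
have s2 : sin (2 * pi) = 0 :> R by rewrite mulr_natl sin2pi.
have hpi := pi_ge0 R.
have a0 := acos_ge0 hc; have a1 := acos_lepi hc.
have cK : cos (acos c) = c by apply: acosK; rewrite in_itv /= hc.
have sK : sin (acos c) = `|s| by rewrite sin_acos.
case: (leP 0 s) => hs.
- exists (acos c); split; first by rewrite /in_angle; apply/andP; split; lra.
  by rewrite cK sK ger0_norm.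
- exists (2 * pi - acos c); split; first by rewrite /in_angle; apply/andP; split; lra.
  rewrite cosB sinB c2 s2 cK sK ltr0_norm //; split; ring.
Qed.

Lemma psd1 (L : 'M[C]_2 -> 'M[C]_2)
  (Hcp : forall (n : nat) (X : 'I_n -> 'I_n -> 'M[C]_2), psd_block X -> psd_block (fun i j => L (X i j)))
  (X : 'M[C]_2) : (forall v : 'cV[C]_2, 0 <= (adj v *m X *m v) 0 0) ->
  forall v : 'cV[C]_2, 0 <= (adj v *m L X *m v) 0 0.
Proof.
move=> HX v.
have H1 : psd_block (fun _ _ : 'I_1 => X) by move=> w; rewrite !big_ord1; exact: HX.
by move: (Hcp 1%N _ H1 (fun _ => v)); rewrite /= !big_ord1.
Qed.


Lemma in_angle0 : in_angle (0 : R).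
Proof. by rewrite /in_angle lexx /= mulr_ge0 ?ler0n ?pi_ge0. Qed.

Lemma main (L : 'M[C]_2 -> 'M[C]_2) : is_qubit_channel L ->
  2 <= 2 * opt_coh_frac L + decoh_power L <= 3.
Proof.
case=> _ [Hcp Htr].
have SF (psi : 'cV[C]_2) : unit_vec psi -> exists p q x y : R,
  [/\ L (Defs.proj psi) 0 0 = p +i* 0, L (Defs.proj psi) 1 1 = q +i* 0,
      L (Defs.proj psi) 0 1 = x +i* y, L (Defs.proj psi) 1 0 = x +i* (-y) &
   [/\ 0 <= p, 0 <= q, p + q = 1 & forall a1 a2 b1 b2, 0 <= G p q x y a1 a2 b1 b2]].
  move=> u; apply: state_facts; first exact: (psd1 L Hcp _ (proj_psd psi)).
  by rewrite Htr tr_proj.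
have cf_le1 (psi : 'cV[C]_2) : unit_vec psi -> forall t0 t1, expect (mcs t0 t1) (L (Defs.proj psi)) <= 1.
  move=> u t0 t1; have [p [q [x [y [E00 E11 E01 E10 [hp hq hpq Hf]]]]]] := SF psi u.
  exact: (expect_le1 _ _ _ _ _ _ _ E00 E11 E01 E10 hpq Hf).
have MCS00 : MCS (mcs (0:R) 0) by exists 0, 0; split; [exact: in_angle0 | split; [exact: in_angle0|]].
have cf_ub (psi : 'cV[C]_2) : unit_vec psi -> ubound [set expect phi (L (Defs.proj psi)) | phi in @MCS R] 1.
  by move=> u _ [phi [t0 [t1 [_ [_ ->]]]] <-]; exact: cf_le1.
have cf_le (psi : 'cV[C]_2) : unit_vec psi -> coh_frac (L (Defs.proj psi)) <= 1.
  move=> u; apply: ge_sup; last exact: cf_ub.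
  by exists (expect (mcs 0 0) (L (Defs.proj psi))); exists (mcs 0 0).
have opt_ub : ubound [set coh_frac (L (Defs.proj psi)) | psi in @unit_vec R] 1.
  by move=> _ [psi u <-]; exact: cf_le.
have opt_le : opt_coh_frac L <= 1.
  apply: ge_sup opt_ub.
  by exists (coh_frac (L (Defs.proj (mcs 0 0)))); exists (mcs 0 0) => //; exact: unit_mcs.
have D_ub : ubound [set Cl1 (Defs.proj phi) - Cl1 (L (Defs.proj phi)) | phi in @MCS R] 1.
  move=> _ [phi [t0 [t1 [_ [_ ->]]]] <-]; rewrite Cl1_mcs Cl1E.
  have := normc_ge0 (L (Defs.proj (mcs t0 t1)) 0 1); have := normc_ge0 (L (Defs.proj (mcs t0 t1)) 1 0).
  lra.
have D_le : decoh_power L <= 1.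
  apply: ge_sup D_ub.
  by exists (Cl1 (Defs.proj (mcs 0 0)) - Cl1 (L (Defs.proj (mcs 0 0)))); exists (mcs 0 0).
have [p [q [x [y [E00 E11 E01 E10 [hp hq hpq Hf]]]]]] := SF _ (unit_mcs 0 0).
set rho := L (Defs.proj (mcs 0 0)) in E00 E11 E01 E10 *.
set r := Num.sqrt (x ^+ 2 + y ^+ 2).
have Cr : Cl1 rho = 2 * r.
  rewrite Cl1E E01 E10 /= sqrrN -/r; lra.
have hr2 : r ^+ 2 = x ^+ 2 + y ^+ 2 by rewrite sqr_sqrtr // addr_ge0 // sqr_ge0.
have [c [s [hcs hr]]] : exists c s : R, c ^+ 2 + s ^+ 2 = 1 /\ x * c - y * s = r.
  case: (eqVneq r 0) => r0.
  - exists 1, 0; split; first by rewrite expr1n expr0n addr0.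
    move: hr2; rewrite r0 expr2 mul0r => h.
    have hx2 : x ^+ 2 = 0 by have := sqr_ge0 x; have := sqr_ge0 y; lra.
    have hy2 : y ^+ 2 = 0 by have := sqr_ge0 x; have := sqr_ge0 y; lra.
    have hx : x = 0 by move/eqP: hx2; rewrite expf_eq0 /= => /eqP.
    have hy : y = 0 by move/eqP: hy2; rewrite expf_eq0 /= => /eqP.
    by rewrite hx hy; ring.
  - exists (x / r), (- y / r); split.
    + have -> : (x / r) ^+ 2 + (- y / r) ^+ 2 = (x ^+ 2 + y ^+ 2) / r ^+ 2 by field.
      by rewrite -hr2 divff // expf_neq0.
    + have -> : x * (x / r) - y * (- y / r) = (x ^+ 2 + y ^+ 2) / r by field.
      by rewrite -hr2 expr2 mulfK.
have [t [ht [ct st]]] := angle _ _ hcs.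
have elow : 2 * expect (mcs 0 t) rho = 1 + 2 * r.
  by rewrite (expect_lower _ _ _ _ _ _ E00 E11 E01 E10 hpq) ct st hr.
have MCSt : MCS (mcs (0:R) t) by exists 0, t; split; [exact: in_angle0 | split].
have c_ge : expect (mcs 0 t) rho <= coh_frac rho.
  apply: (ub_le_sup (E := [set expect phi rho | phi in @MCS R])); last by exists (mcs 0 t).
  by exists 1; exact: cf_ub (unit_mcs 0 0).
have o_ge : coh_frac rho <= opt_coh_frac L.
  apply: (ub_le_sup (E := [set coh_frac (L (Defs.proj psi)) | psi in @unit_vec R])).
    by exists 1.
  by exists (mcs 0 0) => //; exact: unit_mcs.
have d_ge : 1 - Cl1 rho <= decoh_power L.
  apply: (ub_le_sup (E := [set Cl1 (Defs.proj phi) - Cl1 (L (Defs.proj phi)) | phi in @MCS R])).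
    by exists 1.
  by exists (mcs 0 0) => //; rewrite Cl1_mcs.
apply/andP; split; lra.
Qed.

End Help.

Theorem theorem4 (R : realType) (L : 'M[R[i]]_2 -> 'M[R[i]]_2) :
  is_qubit_channel L ->
  2 <= 2 * opt_coh_frac L + decoh_power L <= 3.
Proof. exact: main. Qed.
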